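(* Let $\mathcal{H}$ be a complex Hilbert space of finite dimension $n\ge2$, $m\ge2$, $\sigma$ a self-adjoint operator on $\mathcal{H}$, and $\rho$ a density operator on $\mathcal{H}^{\otimes m}$. (a) If $\rho$ is $\sigma$SMC then $\rho$ is $\sigma$EC; the converse is not true in general. (b) If $\sigma$ has nondegenerate spectrum and $\rho$ is $\sigma$SMC, then $\rho$ is RSC; the converse is not true in general. (c) If $\sigma$ has nondegenerate spectrum and $\rho$ is $\sigma$SMC, then $\rho$ is SSC; the converse is not true in general.
   Context: For $X$ an operator on $\mathcal{H}$, $X^{(i)}=I^{\otimes(i-1)}\otimes X\otimes I^{\otimes(m-i)}$. For a permutation $\pi$ of $\{1,\dots,m\}$, $U_\pi$ is the unitary on $\mathcal{H}^{\otimes m}$ with $U_\pi(X_1\otimes\cdots\otimes X_m)U_\pi^\dagger=X_{\pi(1)}\otimes\cdots\otimes X_{\pi(m)}$. Definitions: $\rho$ is $\sigma$EC ($\sigma$-expectation consensus) if $\mathrm{Tr}(\sigma^{(1)}\rho)=\cdots=\mathrm{Tr}(\sigma^{(m)}\rho)$; $\rho$ is RSC (reduced state consensus) if the reduced states $\bar\rho_k=\mathrm{Tr}_{\bigotimes_{j\ne k}\mathcal{H}_j}(\rho)$ are all equal; $\rho$ is SSC (symmetric state consensus) if $U_\pi\rho U_\pi^\dagger=\rho$ for all $\pi$; writing $\sigma=\sum_j s_j\Pi_j$ with distinct $s_j$ and spectral projectors $\Pi_j$, $\rho$ is $\sigma$SMC (single $\sigma$-measurement consensus) if $\mathrm{Tr}(\Pi_j^{(k)}\Pi_j^{(\ell)}\rho)=\mathrm{Tr}(\Pi_j^{(\ell)}\rho)$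 for all $k,\ell$ and all $j$. ''Not true in general'' means there exist $m,n,\sigma$ and states for which the converse implication fails. *)

(* Defs.v *)
(* Finite-dimensional complex Hilbert space H = C^n, where C is
   an arbitrary numClosedFieldType (e.g. complex R for R a real type).
   Operators on H are 'M[C]_n; operators on H^{(x)m} are matrices indexed by the
   tensor basis {ffun 'I_m -> 'I_n} (basis vector |x_1 ... x_m>), enumerated via
   enum_rank / enum_val. *)
From HB Require Import structures.
From mathcomp Require Import all_boot all_order all_algebra all_fingroup.
From mathcomp Require Export sesquilinear spectral.
Set Implicit Arguments. Unset Strict Implicit. Unset Printing Implicit Defensive.
Import Order.TTheory GRing.Theory Num.Theory.
Local Open Scope ring_scope.
Local Open Scope sesquilinear_scope.

Section QDefs.
Variable C : numClosedFieldType.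

Definition tidx (m n : nat) := {ffun 'I_m -> 'I_n}.
Definition tdim (m n : nat) := #|{ffun 'I_m -> 'I_n}|.

Definition selfadj k (A : 'M[C]_k) : Prop := A \is hermsymmx.

Definition psdmx k (A : 'M[C]_k) : Prop :=
  forall v : 'cV[C]_k, 0 <= ((v ^t*) *m A *m v) 0 0.
Definition density k (A : 'M[C]_k) : Prop := psdmx A /\ \tr A = 1.

(* X^{(i)} = I^{(x)(i-1)} (x) X (x) I^{(x)(m-i)} *)
Definition embed m n (X : 'M[C]_n) (i : 'I_m) : 'M[C]_(tdim m n) :=
  \matrix_(a, b)
    (let x : tidx m n := enum_val a in let y : tidx m n := enum_val b in
     if [forall j, (j != i) ==> (x j == y j)] then X (x i) (y i) else 0).

(* permutation unitary U_pi : |x_1..x_m> |-> |x_{pi 1} .. x_{pi m}>, so that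
   U_pi (X_1 (x)..(x) X_m) U_pi^* = X_{pi 1} (x) .. (x) X_{pi m} *)
Definition permU m n (pi : 'S_m) : 'M[C]_(tdim m n) :=
  \matrix_(a, b)
    (let x : tidx m n := enum_val a in let y : tidx m n := enum_val b in
     if x == [ffun k => y (pi k)] then 1 else 0).

(* reduced state on the k-th factor (partial trace over all other factors) *)
Definition reduced m n (rho : 'M[C]_(tdim m n)) (k : 'I_m) : 'M[C]_n :=
  \matrix_(i, j) \sum_(x : tidx m n) \sum_(y : tidx m n
      | [&& x k == i, y k == j & [forall l, (l != k) ==> (x l == y l)]])
      rho (enum_rank x) (enum_rank y).

Definition spectral_decomp n (sigma : 'M[C]_n) (r : nat) (s : 'I_r -> C)
    (P : 'I_r -> 'M[C]_n) : Prop :=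
  [/\ injective s,
      forall j, P j != 0 /\ selfadj (P j) /\ P j *m P j = P j,
      forall j j', j != j' -> P j *m P j' = 0,
      \sum_j P j = 1%:M
    & sigma = \sum_j s j *: P j].

Definition sigmaEC m n (sigma : 'M[C]_n) (rho : 'M[C]_(tdim m n)) : Prop :=
  forall k l : 'I_m, \tr (embed sigma k *m rho) = \tr (embed sigma l *m rho).

Definition RSC m n (rho : 'M[C]_(tdim m n)) : Prop :=
  forall k l : 'I_m, reduced rho k = reduced rho l.

Definition SSC m n (rho : 'M[C]_(tdim m n)) : Prop :=
  forall pi : 'S_m, permU n pi *m rho *m (permU n pi) ^t* = rho.

(* single sigma-measurement consensus, w.r.t. the spectral decomposition of
   sigma (unique up to relabelling, so the choice of decomposition is immaterial) *)
Definition sigmaSMC m n (sigma : 'M[C]_n) (rho : 'M[C]_(tdim m n)) : Prop :=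
  exists r (s : 'I_r -> C) (P : 'I_r -> 'M[C]_n),
    spectral_decomp sigma s P /\
    forall (j : 'I_r) (k l : 'I_m),
      \tr (embed (P j) k *m embed (P j) l *m rho) = \tr (embed (P j) l *m rho).

Definition simple_spectrum n (sigma : 'M[C]_n) : Prop :=
  exists s : 'I_n -> C, injective s /\ forall i, eigenvalue sigma (s i).

End QDefs.

(* Main.v *)
Require Import Defs.
From HB Require Import structures.
From mathcomp Require Import all_boot all_order all_algebra all_fingroup.
From mathcomp Require Import sesquilinear spectral ring.
Set Implicit Arguments. Unset Strict Implicit. Unset Printing Implicit Defensive.
Import Order.TTheory GRing.Theory Num.Theory.
Local Open Scope ring_scope.
Local Open Scope sesquilinear_scope.


Section Infra.
Variable C : numClosedFieldType.
Variables m n : nat.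
Local Notation N := (tdim m n).
Local Notation T := (tidx m n).

Lemma evK (x : T) : (enum_val (enum_rank x : 'I_N) : T) = x.
Proof. exact: enum_rankK. Qed.
Lemma rankK (a : 'I_N) : enum_rank (enum_val a : T) = a.
Proof. exact: enum_valK. Qed.

Lemma matrixT (A B : 'M[C]_N) :
  (forall x y : T, A (enum_rank x) (enum_rank y) = B (enum_rank x) (enum_rank y)) -> A = B.
Proof. by move=> H; apply/matrixP => a b; rewrite -(rankK a) -(rankK b). Qed.

Lemma sumN (F : 'I_N -> C) : \sum_(c : 'I_N) F c = \sum_(x : T) F (enum_rank x).
Proof.
rewrite (reindex (@enum_rank T)) //; apply: onW_bij; exact: enum_rank_bij.
Qed.

Definition tens (A : 'I_m -> 'M[C]_n) : 'M[C]_N :=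
  \matrix_(a, b) \prod_i A i ((enum_val a : T) i) ((enum_val b : T) i).

Lemma eq_tens A B : (forall i, A i = B i) -> tens A = tens B.
Proof. by move=> H; apply/matrixP => a b; rewrite !mxE; apply: eq_bigr => i _; rewrite H. Qed.

Lemma tensE A x y : tens A (enum_rank x) (enum_rank y) = \prod_i A i (x i) (y i).
Proof. by rewrite mxE !evK. Qed.

Lemma tensM A B : tens A *m tens B = tens (fun i => A i *m B i).
Proof.
apply/matrixT => x y; rewrite mxE sumN tensE.
rewrite (eq_bigr (fun z : T => \prod_i (A i (x i) (z i) * B i (z i) (y i)))); last first.
  by move=> z _; rewrite !tensE -big_split.
under [RHS]eq_bigr => i _ do rewrite mxE.
by rewrite bigA_distr_bigA.
Qed.

Lemma tens_adj A : (tens A)^t* = tens (fun i => (A i)^t*).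
Proof.
apply/matrixP => a b; rewrite !mxE rmorph_prod; apply: eq_bigr => i _.
by rewrite !mxE.
Qed.

Lemma tens1 : tens (fun _ => 1%:M) = 1%:M.
Proof.
apply/matrixT => x y; rewrite tensE !mxE (inj_eq enum_rank_inj).
have [<-|nxy] := eqVneq x y.
  by rewrite big1 // => i _; rewrite mxE eqxx.
have /existsP[i ni] : [exists i, x i != y i].
  rewrite -negb_forall; apply: contra nxy => /forallP H.
  by apply/eqP/ffunP => i; apply/eqP.
by rewrite (bigD1 i) //= mxE (negbTE ni) mul0r.
Qed.

Lemma tr_tens A : \tr (tens A) = \prod_i \tr (A i).
Proof.
rewrite /mxtrace sumN (eq_bigr (fun x : T => \prod_i A i (x i) (x i))); last first.
  by move=> x _; rewrite tensE.
by rewrite bigA_distr_bigA.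
Qed.

Definition lift1 (X : 'M[C]_n) (k : 'I_m) := fun i => if i == k then X else 1%:M.

Lemma embed_tens X k : embed X k = tens (lift1 X k).
Proof.
apply/matrixP => a b; rewrite !mxE (bigD1 k) //= /lift1 eqxx.
case: ifP => [/forallP H|/negbT/forallPn [i]].
  rewrite big1 ?mulr1 // => i ik; rewrite (negbTE ik) mxE.
  by have /implyP/(_ ik) -> := H i.
rewrite negb_imply => /andP [ik ni].
by rewrite (bigD1 i) //= (negbTE ik) mxE (negbTE ni) mul0r mulr0.
Qed.

Lemma embed_comm (X : 'M[C]_n) (k l : 'I_m) : embed X k *m embed X l = embed X l *m embed X k.
Proof.
rewrite !embed_tens !tensM; apply: eq_tens => i; rewrite /lift1.
by case: (i == k); case: (i == l); rewrite ?mulmx1 ?mul1mx.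
Qed.

Lemma embed_sum r (s : 'I_r -> C) (P : 'I_r -> 'M[C]_n) (k : 'I_m) :
  embed (\sum_j s j *: P j) k = \sum_j s j *: embed (P j) k.
Proof.
apply/matrixP => a b; rewrite summxE mxE /=.
case: ifP => H; last by rewrite big1 // => j _; rewrite !mxE /= H mulr0.
by rewrite summxE; apply: eq_bigr => j _; rewrite !mxE /= H.
Qed.

End Infra.


Section PSD.
Variable C : numClosedFieldType.

Lemma slope0 (c d : C) : (forall l : C, l \is Num.real -> 0 <= l * c + d) -> c = 0.
Proof.
move=> H; have d0 : 0 <= d by have := H 0 (rpred0 _); rewrite mul0r add0r.
have dR : d \is Num.real := ger0_real d0.
have cR : c \is Num.real.
  have := ger0_real (H 1 (rpred1 _)); rewrite mul1r => cdR.
  by have := rpredB cdR dR; rewrite addrK.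
apply/eqP; apply: contraT => c0.
have lR : (- (d + 1) / c) \is Num.real by rewrite rpredM ?rpredN ?rpredD ?rpred1 // realV.
have := H _ lR; rewrite divfK // opprD addrAC addNr.
by rewrite add0r oppr_ge0 ler10.
Qed.

Lemma quad k (A : 'M[C]_k) (v : 'cV[C]_k) :
  (v ^t* *m A *m v) 0 0 = \sum_a \sum_b (v a 0)^* * A a b * v b 0.
Proof.
rewrite mxE exchange_big; apply: eq_bigr => b _.
by rewrite mxE mulr_suml; apply: eq_bigr => a _; rewrite !mxE.
Qed.

Lemma quad2 k (A : 'M[C]_k) (x y : 'I_k) (t : C) : x != y ->
  let v := \col_i (if i == x then t else if i == y then 1 else 0) in
  (v ^t* *m A *m v) 0 0 = t^* * t * A x x + t^* * A x y + t * A y x + A y y.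
Proof.
move=> nxy v.
have vx : v x 0 = t by rewrite /v mxE eqxx.
have vy : v y 0 = 1 by rewrite /v mxE eq_sym (negbTE nxy) eqxx.
have vo a : a != x -> a != y -> v a 0 = 0.
  by move=> ax ay; rewrite /v mxE (negbTE ax) (negbTE ay).
have S a : \sum_b (v a 0)^* * A a b * v b 0 = (v a 0)^* * (A a x * t + A a y).
  rewrite (bigD1 x) //= (bigD1 y) /=; last by rewrite eq_sym nxy.
  rewrite big1 ?addr0; first by rewrite vx vy mulr1 mulrDr !mulrA.
  by move=> b /andP[b_y bx]; rewrite (vo b) // mulr0.
rewrite quad (eq_bigr _ (fun a _ => S a)).
rewrite (bigD1 x) //= (bigD1 y) /=; last by rewrite eq_sym nxy.
rewrite big1 ?addr0; last by move=> a /andP[ay ax]; rewrite (vo a) // rmorph0 mul0r.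
rewrite vx vy rmorph1 !mul1r mulrDr !mulrA [t^* * A x x * t]mulrAC [t^* * t]mulrC.
rewrite [A y x * t]mulrC -!addrA; congr (_ + _); rewrite mulrC; congr (_ + _).
Qed.

Lemma psd_diag k (A : 'M[C]_k) x : psdmx A -> 0 <= A x x.
Proof.
move=> H; have := H (\col_i (i == x)%:R); rewrite quad (bigD1 x) //=.
rewrite [X in _ + X]big1 ?addr0; last first.
  by move=> a ax; rewrite big1 // => b _; rewrite mxE (negbTE ax) rmorph0 !mul0r.
rewrite (bigD1 x) //= big1 ?addr0; first by rewrite !mxE eqxx rmorph1 mul1r mulr1.
by move=> b bx; rewrite [v in _ * v]mxE (negbTE bx) mulr0.
Qed.

Lemma psd_zero k (A : 'M[C]_k) x y : psdmx A -> A x x = 0 -> A x y = 0 /\ A y x = 0.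
Proof.
move=> H Ax; have [<-|nxy] := eqVneq x y; first by rewrite Ax.
have Q t : 0 <= t^* * A x y + t * A y x + A y y.
  by have := H (\col_i (if i == x then t else if i == y then 1 else 0)); rewrite quad2 // Ax mulr0 add0r.
have c1 : A x y + A y x = 0.
  apply: (@slope0 _ (A y y)) => l lR; have := Q l.
  by rewrite (conj_Creal lR) mulrDr.
have c2 : 'i * (A y x - A x y) = 0.
  apply: (@slope0 _ (A y y)) => l lR; have := Q ('i * l).
  rewrite rmorphM /= conjCi (conj_Creal lR).
  suff -> : (- 'i * l * A x y + 'i * l * A y x) = l * ('i * (A y x - A x y)) by [].
  by ring.
move: c2 => /eqP; rewrite mulf_eq0 (negbTE (@neq0Ci C)) /= subr_eq0 => /eqP e.
move: c1; rewrite e -mulr2n -mulr_natr => /eqP; rewrite mulf_eq0 pnatr_eq0 orbF.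
by move/eqP => ->.
Qed.

End PSD.


Section Gen.
Variable C : numClosedFieldType.
Variables m n : nat.
Local Notation N := (tdim m n).
Local Notation T := (tidx m n).

Lemma embedE (X : 'M[C]_n) k (x y : T) :
  embed X k (enum_rank x) (enum_rank y) =
  if [forall j, (j != k) ==> (x j == y j)] then X (x k) (y k) else 0.
Proof. by rewrite mxE /= !evK. Qed.

Lemma permUE (pi : 'S_m) (x y : T) :
  permU C n pi (enum_rank x) (enum_rank y) = if x == [ffun k => y (pi k)] then 1 else 0 :> C.
Proof. by rewrite mxE /= !evK. Qed.

Lemma reduced_tr (Y : 'M[C]_N) k a b :
  reduced Y k a b = \tr (Y *m embed (delta_mx b a) k).
Proof.
rewrite mxE /mxtrace sumN; apply: eq_bigr => x _.
rewrite mxE sumN big_mkcond /=; apply: eq_bigr => y _.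
rewrite embedE mxE.
have -> : [forall j, (j != k) ==> (y j == x j)] = [forall l, (l != k) ==> (x l == y l)].
  by apply: eq_forallb => j; rewrite [y j == _]eq_sym.
case: [forall _, _]; case: (x k == a); case: (y k == b);
  by rewrite /= ?mulr1 ?mulr0.
Qed.

Lemma prod_lift (a b : C) (k : 'I_m) :
  \prod_i (if i == k then a else b) = a * b ^+ m.-1.
Proof.
rewrite (bigD1 k) //= eqxx; congr (_ * _).
rewrite (eq_bigr (fun _ => b)); last by move=> i /negbTE ->.
by rewrite prodr_const cardC1 card_ord.
Qed.

Lemma tr_embed (X : 'M[C]_n) (k : 'I_m) : \tr (embed X k) = \tr X * (\tr (1%:M : 'M[C]_n)) ^+ m.-1.
Proof.
rewrite embed_tens tr_tens -(prod_lift _ _ k); apply: eq_bigr => i _.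
by rewrite /lift1; case: (i == k).
Qed.

Definition pcmp (pi : 'S_m) (z : T) : T := [ffun k => z (pi k)].

Lemma pcmpK pi x y : (x == pcmp pi y) = (y == pcmp pi^-1 x).
Proof.
apply/eqP/eqP => [->|->]; apply/ffunP => k; rewrite !ffunE.
  by rewrite permKV.
by rewrite permK.
Qed.

Lemma pcmpKV pi y : pcmp pi (pcmp pi^-1 y) = y.
Proof. by apply/ffunP => k; rewrite !ffunE permK. Qed.

Lemma sum_ind (z0 : T) (F : T -> C) :
  \sum_(z : T) (if z == z0 then 1 else 0) * F z = F z0.
Proof.
rewrite (bigD1 z0) //= eqxx mul1r big1 ?addr0 // => z /negbTE ->.
by rewrite mul0r.
Qed.

Lemma sum_indr (z0 : T) (F : T -> C) :
  \sum_(z : T) F z * (if z == z0 then 1 else 0) = F z0.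
Proof.
rewrite -(sum_ind z0 F); apply: eq_bigr => z _; exact: mulrC.
Qed.

Lemma permU_adj pi : (permU C n pi)^t* = permU C n pi^-1 :> 'M[C]_N.
Proof.
apply/matrixT => x y; rewrite !mxE /= !evK.
rewrite -/(pcmp pi x) -/(pcmp pi^-1 y) pcmpK.
by case: ifP; rewrite ?rmorph1 ?rmorph0.
Qed.

Lemma permU_unit pi : permU C n pi *m (permU C n pi)^t* = 1%:M :> 'M[C]_N.
Proof.
rewrite permU_adj; apply/matrixT => x y; rewrite mxE sumN.
rewrite (eq_bigr (fun z => (if z == pcmp pi^-1 x then 1 else 0) *
                          (if z == pcmp pi^-1 y then 1 else 0))); last first.
  by move=> z _; rewrite !permUE -/(pcmp pi z) -/(pcmp pi^-1 y) pcmpK.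
rewrite sum_ind !mxE (inj_eq enum_rank_inj).
have -> : (pcmp pi^-1 x == pcmp pi^-1 y) = (x == y).
  by apply/eqP/eqP => [/(congr1 (pcmp pi))|->//]; rewrite !pcmpKV.
by case: (x == y).
Qed.

End Gen.


Lemma mxtrace_sum (C : numClosedFieldType) k (I : finType) (F : I -> 'M[C]_k) :
  \tr (\sum_j F j) = \sum_j \tr (F j).
Proof. exact: raddf_sum. Qed.

Lemma partA (C : numClosedFieldType) m n (sigma : 'M[C]_n) (rho : 'M[C]_(tdim m n)) :
  sigmaSMC sigma rho -> sigmaEC sigma rho.
Proof.
case=> r [s [P [[_ _ _ _ ->] H]]] k l.
rewrite !embed_sum !mulmx_suml !mxtrace_sum; apply: eq_bigr => j _.
rewrite -!scalemxAl !mxtraceZ; congr (_ * _).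
have h1 := H j k l; have h2 := H j l k.
by rewrite -h2 embed_comm h1.
Qed.

Lemma sigP (C : numClosedFieldType) n (sigma : 'M[C]_n) r (s : 'I_r -> C) P :
  spectral_decomp sigma s P ->
  forall j, sigma *m P j = s j *: P j /\ P j *m sigma = s j *: P j.
Proof.
case=> _ Hp Ho _ -> j; split.
  rewrite mulmx_suml (bigD1 j) //= big1 ?addr0; first by rewrite -scalemxAl (Hp j).2.2.
  by move=> i ij; rewrite -scalemxAl Ho ?scaler0.
rewrite mulmx_sumr (bigD1 j) //= big1 ?addr0; first by rewrite -scalemxAr (Hp j).2.2.
by move=> i ij; rewrite -scalemxAr Ho ?scaler0 // eq_sym.
Qed.

Section BC.
Variable C : numClosedFieldType.
Variables m n : nat.
Hypothesis m2 : (2 <= m)%N.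
Local Notation N := (tdim m n).
Local Notation T := (tidx m n).

Definition cst (x : T) := [forall i, forall j, x i == x j].

Lemma cstP (x : T) : cst x -> forall i j, x i = x j.
Proof. by move=> /forallP H i j; apply/eqP; move/forallP: (H i). Qed.

Lemma other (k : 'I_m) : exists j : 'I_m, j != k.
Proof.
have : (0 < #|predC1 k|)%N by rewrite cardC1 card_ord; case: m m2 => [|[|]].
by case/card_gt0P => j; rewrite inE => jk; exists j.
Qed.

Lemma embed_cst (X : 'M[C]_n) k (x y : T) : cst x -> cst y ->
  embed X k (enum_rank x) (enum_rank y) = if x k == y k then X (x k) (y k) else 0.
Proof.
move=> /cstP cx /cstP cy; rewrite embedE.
have [j jk] := other k.
have -> : [forall j, (j != k) ==> (x j == y j)] = (x k == y k); last by [].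
apply/forallP/idP => [/(_ j)|/eqP e i]; first by rewrite jk /= (cx j k) (cy j k).
by apply/implyP => _; rewrite (cx i k) (cy i k) e.
Qed.

Definition Dc : 'M[C]_N := diag_mx (\row_a (cst (enum_val a : T))%:R).

Lemma DcE (A : 'M[C]_N) x y :
  (Dc *m A *m Dc) (enum_rank x) (enum_rank y) = (cst x)%:R * A (enum_rank x) (enum_rank y) * (cst y)%:R.
Proof. by rewrite mul_mx_diag mul_diag_mx !mxE !evK. Qed.

Lemma DED (X : 'M[C]_n) k l : Dc *m embed X k *m Dc = Dc *m embed X l *m Dc.
Proof.
apply/matrixT => x y; rewrite !DcE.
case cx: (cst x); last by rewrite !mul0r.
case cy: (cst y); last by rewrite !mulr0.
rewrite !embed_cst //.
by rewrite (cstP cx k l) (cstP cy k l).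
Qed.

Lemma Dc_adj : Dc ^t* = Dc.
Proof.
apply/matrixP => a b; rewrite !mxE eq_sym.
by case: eqP => [->|_]; rewrite ?mulr0n ?mulr1n ?rmorph0 // conjC_nat.
Qed.

Lemma permU_D pi : permU C n pi *m Dc = Dc.
Proof.
apply/matrixT => x y; rewrite mul_mx_diag !mxE /= !evK (inj_eq enum_rank_inj).
case cy: (cst y); last first.
  rewrite mulr0; case: eqP => // ->; by rewrite cy mulr0n.
have -> : [ffun k => y (pi k)] = y.
  by apply/ffunP => k; rewrite ffunE (cstP cy (pi k) k).
by case: eqP => [->|_]; rewrite ?cy ?mulr1 ?mul0r ?mulr1n ?mulr0n.
Qed.

Lemma D_permU pi : Dc *m (permU C n pi)^t* = Dc.
Proof.
by rewrite -[in LHS]Dc_adj -map_mxM -trmx_mul permU_D Dc_adj.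
Qed.

End BC.


Section Spec.
Variable C : numClosedFieldType.
Variable n : nat.
Variable sigma : 'M[C]_n.
Hypothesis sadj : selfadj sigma.
Hypothesis simp : simple_spectrum sigma.

Local Notation P0 := (spectralmx sigma).
Local Notation d := (spectral_diag sigma).
Local Notation U := (P0 ^t*).

Lemma P0U : P0 *m U = 1%:M.
Proof. exact/unitarymxP/spectral_unitarymx. Qed.

Lemma UP0 : U *m P0 = 1%:M.
Proof. by rewrite -invmx_unitary ?spectral_unitarymx // mulVmx // spectral_unit. Qed.

Lemma sigmaE : sigma = U *m diag_mx d *m P0.
Proof.
have := hermitian_normalmx sadj => /orthomx_spectralP {1}->.
by rewrite invmx_unitary // spectral_unitarymx.
Qed.

Lemma sigmaU : sigma *m U = U *m diag_mx d.
Proof. by rewrite {1}sigmaE -!mulmxA P0U mulmx1. Qed.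

Lemma eig_d a : eigenvalue sigma a -> exists b, a = d 0 b.
Proof.
case/eigenvalueP => v Hv v0.
have w0 : v *m U != 0.
  apply: contra v0 => /eqP w0; apply/eqP.
  by rewrite -[v]mulmx1 -UP0 mulmxA w0 mul0mx.
have [b wb] : exists b, (v *m U) 0 b != 0.
  apply/existsP; apply: contraR w0; rewrite negb_exists => /forallP H.
  apply/eqP/matrixP => i j; rewrite ord1 [RHS]mxE; by have := H j; rewrite negbK => /eqP.
exists b; have := congr1 (mulmx^~ U) Hv.
rewrite -mulmxA sigmaU mulmxA -scalemxAl => /matrixP/(_ 0 b).
move: wb; set w := v *m U => wb.
rewrite mul_mx_diag mxE [X in _ = X]mxE => /eqP.
by rewrite mulrC -subr_eq0 -mulrBl mulf_eq0 (negbTE wb) orbF subr_eq0 => /eqP ->.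
Qed.

Lemma d_inj : injective (fun a => d 0 a).
Proof.
case: simp => t [tinj tH].
have /fin_all_exists [g Hg] : forall i, exists b, t i = d 0 b by move=> i; exact: eig_d.
have ginj : injective g by move=> i j e; apply: tinj; rewrite !Hg e.
have [g' gK g'K] := injF_bij ginj.
move=> a b /= e; rewrite -(g'K a) -(g'K b) -!Hg in e.
by rewrite -(g'K a) -(g'K b) (tinj _ _ e).
Qed.

Lemma diagE : P0 *m sigma *m U = diag_mx d.
Proof. by rewrite -mulmxA sigmaU mulmxA P0U mul1mx. Qed.

Variables (r : nat) (s : 'I_r -> C) (P : 'I_r -> 'M[C]_n).
Hypothesis dec : spectral_decomp sigma s P.

Definition Q j := P0 *m P j *m U.

Lemma Qd j : diag_mx d *m Q j = s j *: Q j.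
Proof.
rewrite -diagE /Q !mulmxA -[P0 *m sigma *m U *m P0]mulmxA UP0 mulmx1.
by rewrite -[P0 *m sigma *m P j]mulmxA (sigP dec j).1 -scalemxAr -!scalemxAl.
Qed.

Lemma dQ j : Q j *m diag_mx d = s j *: Q j.
Proof.
rewrite -diagE /Q !mulmxA -[P0 *m P j *m U *m P0]mulmxA UP0 mulmx1.
by rewrite -[P0 *m P j *m sigma]mulmxA (sigP dec j).2 -scalemxAr -!scalemxAl.
Qed.

Lemma sumQ : \sum_j Q j = 1%:M.
Proof.
case: dec => _ _ _ H1 _.
by rewrite /Q -mulmx_suml -mulmx_sumr H1 mulmx1 P0U.
Qed.

Lemma Q0 j a b : d 0 a != s j -> Q j a b = 0.
Proof.
move=> ne; have := Qd j => /matrixP/(_ a b); rewrite mul_diag_mx !mxE /=.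
move/eqP; rewrite -subr_eq0 -mulrBl mulf_eq0 subr_eq0 (negbTE ne) /=.
by move/eqP.
Qed.

Lemma Q0' j a b : a != b -> Q j a b = 0.
Proof.
move=> ab; have [e|ne] := eqVneq (d 0 a) (s j); last exact: Q0.
have := dQ j => /matrixP/(_ a b); rewrite mul_mx_diag !mxE /=.
move/eqP; rewrite -subr_eq0 mulrC -mulrBl mulf_eq0 subr_eq0 -e.
have -> : (d 0 b == d 0 a) = false.
  by apply/negbTE; apply: contra ab => /eqP /d_inj ->.
by move/eqP.
Qed.

Lemma Q1 j a : d 0 a = s j -> Q j a a = 1.
Proof.
move=> e; have := sumQ => /matrixP/(_ a a); rewrite summxE mxE eqxx /=.
rewrite (bigD1 j) //= big1 ?addr0 // => i ij; apply: Q0; rewrite e.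
case: dec => sinj _ _ _ _; apply: contra ij => /eqP h; apply/eqP; exact: sinj.
Qed.

Lemma exj a : exists j, s j = d 0 a.
Proof.
suff /existsP[j /eqP] : [exists j, s j == d 0 a] by exists j.
apply: contraT; rewrite negb_exists => /forallP H.
have := sumQ => /matrixP/(_ a a); rewrite summxE mxE eqxx /= big1.
  by move/eqP; rewrite eq_sym oner_eq0.
by move=> j _; apply: Q0; rewrite eq_sym; exact: H.
Qed.

Lemma Q_entry j a b : Q j a b = ((a == b) && (d 0 a == s j))%:R.
Proof.
have [<-|ab] := eqVneq a b; last by rewrite Q0'.
have [e|ne] := eqVneq (d 0 a) (s j); first by rewrite Q1.
by rewrite Q0.
Qed.

End Spec.


Section Main.
Variable C : numClosedFieldType.
Variables m n : nat.
Hypothesis m2 : (2 <= m)%N.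
Local Notation N := (tdim m n).
Local Notation T := (tidx m n).
Variable sigma : 'M[C]_n.
Hypothesis sadj : selfadj sigma.
Hypothesis simp : simple_spectrum sigma.
Variables (r : nat) (s : 'I_r -> C) (P : 'I_r -> 'M[C]_n).
Hypothesis dec : spectral_decomp sigma s P.
Variable rho : 'M[C]_N.
Hypothesis rpsd : psdmx rho.
Hypothesis Hc : forall (j : 'I_r) (k l : 'I_m),
      \tr (embed (P j) k *m embed (P j) l *m rho) = \tr (embed (P j) l *m rho).

Local Notation P0 := (spectralmx sigma).
Local Notation d := (spectral_diag sigma).
Local Notation U := (P0 ^t*).
Local Notation D := (Dc C m n).

Definition W : 'M[C]_N := tens (fun _ : 'I_m => U).
Definition Wt : 'M[C]_N := W ^t*.

Lemma WtE : Wt = tens (fun _ => P0).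
Proof. by rewrite /Wt /W tens_adj; apply: eq_tens => i; rewrite trmxCK. Qed.

Lemma WWt : W *m Wt = 1%:M.
Proof. by rewrite WtE /W tensM -tens1; apply: eq_tens => i; rewrite UP0. Qed.

Lemma WtW : Wt *m W = 1%:M.
Proof. by rewrite WtE /W tensM -tens1; apply: eq_tens => i; rewrite P0U. Qed.

Definition rho' := Wt *m rho *m W.

Lemma rhoE : rho = W *m rho' *m Wt.
Proof. by rewrite /rho' !mulmxA WWt mul1mx -mulmxA WWt mulmx1. Qed.

Lemma conj_embed X k : Wt *m embed X k *m W = embed (P0 *m X *m U) k.
Proof.
rewrite !embed_tens WtE /W !tensM; apply: eq_tens => i; rewrite /lift1.
by case: (i == k); rewrite ?mulmx1 ?P0U.
Qed.

Lemma trW A : \tr (A *m rho) = \tr ((Wt *m A *m W) *m rho').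
Proof.
by rewrite {1}rhoE !mulmxA mxtrace_mulC !mulmxA.
Qed.

Lemma conjM A B : Wt *m (A *m B) *m W = (Wt *m A *m W) *m (Wt *m B *m W).
Proof. by rewrite !mulmxA -[Wt *m A *m W *m Wt]mulmxA WWt mulmx1. Qed.

Lemma Hc' j k l :
  \tr (embed (Q sigma P j) k *m embed (Q sigma P j) l *m rho') = \tr (embed (Q sigma P j) l *m rho').
Proof.
have := Hc j k l; rewrite !trW conjM !conj_embed.
by rewrite /Q.
Qed.

Lemma psd' : psdmx rho'.
Proof.
move=> v; have := rpsd (W *m v); rewrite trmx_mul map_mxM.
by rewrite /rho' /Wt !mulmxA.
Qed.

Definition ev j k := \row_(a < N) ((d 0 ((enum_val a : T) k) == s j)%:R : C).

Lemma embed_diag j k : embed (Q sigma P j) k = diag_mx (ev j k).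
Proof.
apply/matrixT => x y; rewrite embedE [RHS]mxE /ev [X in X *+ _]mxE evK (inj_eq enum_rank_inj).
have [<-|nxy] := eqVneq x y.
  rewrite (Q_entry sadj simp dec) eqxx /= mulr1n.
  by have -> : [forall j0, (j0 != k) ==> (x j0 == x j0)] by apply/forallP => i; rewrite eqxx implybT.
rewrite mulr0n; case: ifP => // /forallP H.
rewrite (Q_entry sadj simp dec); case: eqP => // e; case: (negP nxy).
apply/eqP/ffunP => i; have [->//|ik] := eqVneq i k.
by have := H i; rewrite ik /= => /eqP.
Qed.

Lemma tr_diag2 (e1 e2 : 'rV[C]_N) (A : 'M[C]_N) :
  \tr (diag_mx e1 *m diag_mx e2 *m A) = \sum_a e1 0 a * e2 0 a * A a a.
Proof.
rewrite -mulmxA !mul_diag_mx /mxtrace; apply: eq_bigr => a _.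
by rewrite !mxE mulrA.
Qed.

Lemma tr_diag1 (e : 'rV[C]_N) (A : 'M[C]_N) :
  \tr (diag_mx e *m A) = \sum_a e 0 a * A a a.
Proof. by rewrite mul_diag_mx /mxtrace; apply: eq_bigr => a _; rewrite !mxE. Qed.

Lemma diag0 (x : T) : ~~ cst x -> rho' (enum_rank x) (enum_rank x) = 0.
Proof.
rewrite negb_forall => /existsP [k]; rewrite negb_forall => /existsP [l nkl].
have [j ej] := exj sadj dec (x l).
have := Hc' j k l; rewrite !embed_diag tr_diag2 tr_diag1.
move=> H.
pose f a := (ev j l 0 a - ev j k 0 a * ev j l 0 a) * rho' a a.
have S : \sum_a f a = 0.
  rewrite (eq_bigr (fun a => ev j l 0 a * rho' a a - ev j k 0 a * ev j l 0 a * rho' a a)).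
    by rewrite sumrB H subrr.
  by move=> a _; rewrite /f mulrBl.
have f0 : forall a, 0 <= f a.
  move=> a; have z0 : 0 <= rho' a a by apply: psd_diag; exact: psd'.
  move: z0; rewrite /f; set z := rho' a a => z0; rewrite !mxE; apply: mulr_ge0 => //.
  by case: (_ == _); case: (_ == _); rewrite /= ?mulr1 ?mul1r ?mul0r ?mulr0 ?subrr ?subr0 ?ler01 ?lexx.
move: S; move/psumr_eq0P => /(_ (fun a _ => f0 a) (enum_rank x) isT).
rewrite /f; set z := rho' _ _; rewrite !mxE !evK ej eqxx.
have -> : (d 0 (x k) == d 0 (x l)) = false.
  by apply/negbTE; apply: contra nkl => /eqP /(d_inj sadj simp) ->.
have -> : (true%:R - false%:R * true%:R : C) = 1 by rewrite /=; ring.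
by rewrite mul1r.
Qed.

Lemma rho'D : rho' = D *m rho' *m D.
Proof.
apply/matrixT => x y; rewrite DcE.
case cx: (cst x); last first.
  by rewrite mulr0n !mul0r; have [->] := psd_zero (enum_rank y) psd' (diag0 (negbT cx)).
case cy: (cst y); last first.
  by rewrite mulr0n !mulr0; have [_ ->] := psd_zero (enum_rank x) psd' (diag0 (negbT cy)).
by rewrite !mulr1n mul1r mulr1.
Qed.

Lemma trsand (A B Dm : 'M[C]_N) : \tr (A *m (Dm *m B *m Dm)) = \tr (Dm *m A *m Dm *m B).
Proof. by rewrite !mulmxA mxtrace_mulC !mulmxA. Qed.

Lemma resRSC : RSC rho.
Proof.
move=> k l; apply/matrixP => a b; rewrite !reduced_tr.
rewrite ![\tr (rho *m _)]mxtrace_mulC !trW !conj_embed rho'D.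
rewrite !trsand.
by rewrite (DED m2 _ k l).
Qed.

Lemma permU_W pi : permU C n pi *m W = W *m permU C n pi.
Proof.
apply/matrixT => x y; rewrite !mxE !sumN.
rewrite (eq_bigr (fun z : T => (if z == pcmp (pi^-1)%g x then 1 else 0) *
                          \prod_i U (z i) (y i))); last first.
  by move=> z _; rewrite permUE -/(pcmp pi z) pcmpK /W tensE.
rewrite [RHS](eq_bigr (fun z : T => (\prod_i U (x i) (z i)) *
                          (if z == pcmp pi y then 1 else 0))); last first.
  by move=> z _; rewrite permUE -/(pcmp pi y) /W tensE.
rewrite sum_ind sum_indr (reindex_inj (@perm_inj _ pi)) /=.
by apply: eq_bigr => i _; rewrite !ffunE permK.
Qed.

Lemma sandw k (Pm Pm' W0 Wt0 R Dm : 'M[C]_k) :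
  Pm *m W0 = W0 *m Pm -> Wt0 *m Pm' = Pm' *m Wt0 -> Pm *m Dm = Dm -> Dm *m Pm' = Dm ->
  R = Dm *m R *m Dm -> Pm *m (W0 *m R *m Wt0) *m Pm' = W0 *m R *m Wt0.
Proof.
move=> h1 h2 h3 h4 h5.
have -> : Pm *m (W0 *m R *m Wt0) *m Pm' = W0 *m (Pm *m R *m Pm') *m Wt0.
  by rewrite !mulmxA h1 -[W0 *m Pm *m R *m Wt0 *m Pm']mulmxA h2 !mulmxA.
congr (_ *m _); congr (_ *m _).
by rewrite h5 !mulmxA h3 -[Dm *m R *m Dm *m Pm']mulmxA h4.
Qed.

Lemma resSSC : SSC rho.
Proof.
move=> pi.
have Wt_permU : Wt *m (permU C n pi)^t* = (permU C n pi)^t* *m Wt.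
  by rewrite /Wt -!map_mxM -!trmx_mul permU_W.
rewrite rhoE; apply: sandw.
- exact: permU_W.
- exact: Wt_permU.
- exact: permU_D.
- exact: D_permU.
- exact: rho'D.
Qed.

End Main.


Section Counter.
Variable C : numClosedFieldType.

Lemma trAA k (A : 'M[C]_k) : \tr (A^t* *m A) = 0 -> A = 0.
Proof.
rewrite /mxtrace (eq_bigr (fun i => \sum_j (A j i)^* * A j i)); last first.
  by move=> i _; rewrite mxE; apply: eq_bigr => j _; rewrite !mxE.
have h0 i j : 0 <= (A j i)^* * A j i by rewrite mulrC mul_conjC_ge0.
move/psumr_eq0P => H; apply/matrixP => a b; rewrite mxE.
have := H (fun i _ => sumr_ge0 _ (fun j _ => h0 i j)) b isT.
move/psumr_eq0P => /(_ (fun j _ => h0 b j) a isT) /eqP.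
by rewrite mulf_eq0 conjC_eq0 orbb => /eqP.
Qed.

Lemma trB k (A B : 'M[C]_k) : \tr (A - B) = \tr A - \tr B.
Proof. exact: raddfB. Qed.

Lemma adjP k (P : 'M[C]_k) : selfadj P -> P^t* = P.
Proof. by rewrite /selfadj is_hermitianmxE expr0 scale1r => /eqP <-. Qed.

Definition dv (i : 'I_2) : C := if i == ord0 then 1 else -1.
Definition sig0 : 'M[C]_2 := diag_mx (\row_i dv i).
Definition c0 : C := (tdim 2 2)%:R^-1.
Definition rho0 : 'M[C]_(tdim 2 2) := c0%:M.

Lemma tdim22 : tdim 2 2 = 4%N.
Proof. by rewrite /tdim card_ffun !card_ord. Qed.

Lemma c0_neq0 : c0 != 0.
Proof. by rewrite /c0 invr_eq0 tdim22 pnatr_eq0. Qed.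

Lemma dv_neq : dv ord0 != dv (Ordinal (isT : (1 < 2)%N)).
Proof.
rewrite /dv /= -subr_eq0 opprK.
by rewrite (_ : (1 + 1 : C) = 2%:R) // pnatr_eq0.
Qed.

Lemma sig0_adj : selfadj sig0.
Proof.
rewrite /selfadj is_hermitianmxE expr0 scale1r; apply/eqP/matrixP => i j.
rewrite !mxE eq_sym; case: eqP => [->|_]; rewrite ?mulr0n ?rmorph0 // !mulr1n.
by rewrite /dv; case: (_ == ord0); apply/esym/CrealP; rewrite ?rpredN rpred1.
Qed.

Lemma rho0_density : density rho0.
Proof.
split.
  move=> v; rewrite /rho0 mul_mx_scalar -scalemxAl mxE.
  apply: mulr_ge0; first by rewrite /c0 invr_ge0 ler0n.
  rewrite mxE; apply: sumr_ge0 => i _; rewrite mxE mulrC; rewrite mxE; exact: mul_conjC_ge0.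
rewrite /rho0 mxtrace_scalar -mulr_natr /c0 mulVf //.
by rewrite tdim22 pnatr_eq0.
Qed.

Lemma tr_rho0 (A : 'M[C]_(tdim 2 2)) : \tr (A *m rho0) = c0 * \tr A.
Proof. by rewrite /rho0 mul_mx_scalar mxtraceZ. Qed.

Lemma tr_rho0l (A : 'M[C]_(tdim 2 2)) : \tr (rho0 *m A) = c0 * \tr A.
Proof. by rewrite /rho0 mul_scalar_mx mxtraceZ. Qed.

Lemma rho0_EC : sigmaEC sig0 rho0.
Proof. by move=> k l; rewrite !tr_rho0 !tr_embed. Qed.

Lemma rho0_RSC : RSC rho0.
Proof.
move=> k l; apply/matrixP => a b; rewrite !reduced_tr !tr_rho0l.
by rewrite !tr_embed.
Qed.

Lemma rho0_SSC : SSC rho0.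
Proof.
move=> pi; rewrite /rho0 mul_mx_scalar -scalemxAl permU_unit.
by rewrite scalemx1.
Qed.

Lemma sig0_simple : simple_spectrum sig0.
Proof.
exists dv; split.
  move=> i j; rewrite /dv; case: (i =P ord0) => [->|ni]; case: (j =P ord0) => [->|nj] //.
  - by move=> e; have := dv_neq; rewrite /dv /= [X in X != _]e eqxx.
  - by move=> e; have := dv_neq; rewrite /dv /= -[X in X != _]e eqxx.
  - move=> _; apply/val_inj; case: i ni => [[|[|i']] hi] ni //=.
      by case: ni; apply/val_inj.
    by case: j nj => [[|[|j']] hj] nj //=; case: nj; apply/val_inj.
move=> i; apply/eigenvalueP; exists (delta_mx 0 i).
  apply/matrixP => a b; rewrite mul_mx_diag !mxE.
  case: (b =P i) => [->|_]; rewrite ?andbT ?andbF ?mul0r ?mulr0 //; exact: mulrC.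
apply/negP => /eqP /matrixP /(_ 0 i); rewrite !mxE !eqxx /= => /eqP.
by rewrite oner_eq0.
Qed.

Lemma sum2 (F : 'I_2 -> C) : \prod_i F i = F ord0 * F (Ordinal (isT : (1 < 2)%N)).
Proof. by rewrite !big_ord_recl big_ord0 mulr1; congr (_ * F _); apply: val_inj. Qed.

Lemma rho0_notSMC : ~ sigmaSMC sig0 rho0.
Proof.
case=> r [s [P [dec H]]].
have dec' := dec; case: dec' => sinj Hp Ho Hsum Hsig.
set o1 := Ordinal (isT : (1 < 2)%N).
have tr2 j : \tr (P j) = 2%:R.
  have := H j ord0 o1; rewrite !tr_rho0 => /(mulfI c0_neq0).
  rewrite !embed_tens tensM !tr_tens !sum2 /lift1 /= mulmx1 mul1mx mxtrace1.
  move=> /eqP; rewrite -subr_eq0 -mulrBl mulf_eq0 subr_eq0.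
  case/orP => /eqP // t0; case: (Hp j) => nz _; case/negP: nz.
  apply/eqP/trAA; case: (Hp j) => _ [sa idem].
  by rewrite adjP // idem t0.
have P1 j : P j = 1%:M.
  case: (Hp j) => _ [sa idem].
  suff : 1%:M - P j = 0 by move/eqP; rewrite subr_eq0 => /eqP <-.
  have e : (1%:M - P j)^t* = 1%:M - P j.
    rewrite -[in RHS](adjP sa); apply/matrixP => a b.
    by rewrite !mxE rmorphB /= conjC_nat eq_sym.
  apply: trAA; rewrite e.
  rewrite mulmxBl mul1mx mulmxBr mulmx1 idem subrr subr0.
  by rewrite trB mxtrace1 tr2 subrr.
case: r s P dec H sinj Hp Ho Hsum Hsig tr2 P1 => [|r] s P dec H sinj Hp Ho Hsum Hsig tr2 P1.
  move: Hsum; rewrite big_ord0 => /matrixP /(_ ord0 ord0); rewrite !mxE eqxx /= => /eqP.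
  by rewrite eq_sym oner_eq0.
have [h _] := sigP dec ord0; rewrite P1 mulmx1 in h.
have h0 := congr1 (fun M : 'M[C]_2 => M ord0 ord0) h.
have h1 := congr1 (fun M : 'M[C]_2 => M o1 o1) h.
rewrite /= /sig0 !mxE !eqxx /= !mulr1n mulr1 in h0 h1.
by move: dv_neq; rewrite h0 h1 eqxx.
Qed.

End Counter.

Unset Implicit Arguments.

Theorem proposition5 (C : numClosedFieldType) :
  (* the three implications (a), (b), (c) *)
  (forall (n m : nat) (sigma : 'M[C]_n) (rho : 'M[C]_(tdim m n)),
      (2 <= n)%N -> (2 <= m)%N -> selfadj sigma -> density rho ->
      (sigmaSMC sigma rho -> sigmaEC sigma rho) /\
      (simple_spectrum sigma -> sigmaSMC sigma rho -> RSC rho) /\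
      (simple_spectrum sigma -> sigmaSMC sigma rho -> SSC rho))
  (* (a) the converse fails in general *)
  /\ (exists (n m : nat) (sigma : 'M[C]_n) (rho : 'M[C]_(tdim m n)),
      (2 <= n)%N /\ (2 <= m)%N /\ selfadj sigma /\ density rho /\
      sigmaEC sigma rho /\ ~ sigmaSMC sigma rho)
  (* (b) the converse fails in general, even for simple_spectrum sigma *)
  /\ (exists (n m : nat) (sigma : 'M[C]_n) (rho : 'M[C]_(tdim m n)),
      (2 <= n)%N /\ (2 <= m)%N /\ selfadj sigma /\ density rho /\
      simple_spectrum sigma /\ RSC rho /\ ~ sigmaSMC sigma rho)
  (* (c) the converse fails in general, even for simple_spectrum sigma *)
  /\ (exists (n m : nat) (sigma : 'M[C]_n) (rho : 'M[C]_(tdim m n)),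
      (2 <= n)%N /\ (2 <= m)%N /\ selfadj sigma /\ density rho /\
      simple_spectrum sigma /\ SSC rho /\ ~ sigmaSMC sigma rho).
Proof.
split.
  move=> n m sigma rho n2 m2 sadj [rpsd _]; split; first exact: partA.
  split => simp [r [s [P [dec Hc]]]].
    exact: (resRSC m2 sadj simp dec rpsd Hc).
  exact: (resSSC sadj simp dec rpsd Hc).
have H2 : (2 <= 2)%N by [].
split.
  exists 2%N, 2%N, (sig0 C), (rho0 C).
  split; first exact: H2. split; first exact: H2.
  split; first exact: sig0_adj. split; first exact: rho0_density.
  split; first exact: rho0_EC. exact: rho0_notSMC.
split.
  exists 2%N, 2%N, (sig0 C), (rho0 C).
  split; first exact: H2. split; first exact: H2.
  split; first exact: sig0_adj. split; first exact: rho0_density.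
  split; first exact: sig0_simple. split; first exact: rho0_RSC. exact: rho0_notSMC.
exists 2%N, 2%N, (sig0 C), (rho0 C).
split; first exact: H2. split; first exact: H2.
split; first exact: sig0_adj. split; first exact: rho0_density.
split; first exact: sig0_simple. split; first exact: rho0_SSC. exact: rho0_notSMC.
Qed.
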